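(* Let $\mathbb F$ be an infinite field and $\mathcal F$ a sheaf of finite-dimensional $\mathbb F$-vector spaces on a digraph $G$ such that $\dim\mathcal F(e)\le1$ for every $e\in E_G$. Then $h_1^{\rm twist}(\mathcal F)={\rm m.e.}(\mathcal F)$.
   Context: A digraph has finite vertex and edge sets with tail/head maps $t_G,h_G$. A sheaf $\mathcal F$ on $G$: finite-dimensional vector spaces $\mathcal F(P)$, $P\in V_G\sqcup E_G$, linear maps $\mathcal F(t,e)\colon\mathcal F(e)\to\mathcal F(t_Ge)$, $\mathcal F(h,e)\colon\mathcal F(e)\to\mathcal F(h_Ge)$; $\mathcal F(V)=\bigoplus_v\mathcal F(v)$, $\mathcal F(E)=\bigoplus_e\mathcal F(e)$; $d_h,d_t\colon\mathcal F(E)\to\mathcal F(V)$ send the summand $\mathcal F(e)$ into $\mathcal F(h_Ge)$ resp. $\mathcal F(t_Ge)$ via the restriction maps, $d=d_h-d_t$, $H_1=\ker d$. Twisting: with independent indeterminates $\psi(e)$, $e\in E_G$, $\mathcal F^\psi$ is the sheaf of $\mathbb F(\psi)$-vector spaces with values $\mathcal F(P)\otimes_{\mathbb F}\mathbb F(\psi)$, head maps $\mathcal F(h,e)$, tail maps $\psi(e)\mathcal F(t,e)$; $h_1^{\rm twist}(\mathcal F)=\dim_{\mathbb F(\psi)}H_1(\mathcal F^\psi)$. For $U\subset\mathcal F(V)$, $\Gamma_{\rm ht}(U)=\bigoplus_e\{w\in\mathcal F(e):d_hw\in U,d_tw\in U\}$, ${\rm excess}(\mathcal F,U)=\dim\Gamma_{\rm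 ht}(U)-\dim U$, ${\rm m.e.}(\mathcal F)=\max_U{\rm excess}(\mathcal F,U)$. *)

(* Defs.v *)
From HB Require Import structures.
From mathcomp Require Import all_boot all_order all_algebra.
Set Implicit Arguments. Unset Strict Implicit. Unset Printing Implicit Defensive.
Import GRing.Theory.
Local Open Scope ring_scope.

(* ---------- Sheaves on a digraph (t, h : E -> V), in coordinates ----------
   F(V) = (+)_v F(v) is realised as row vectors 'rV_nV whose coordinate j
   belongs to the summand F(vtx j); likewise F(E) = 'rV_nE with coordinate i
   in the summand F(etx i).  (This is just a choice of bases of all stalks.)
   The restriction maps F(h,e), F(t,e) are assembled into the matrices
   resH, resT : 'M_(nE, nV) (acting on row vectors: w |-> w *m resH), which
   send the summand F(e) into F(h e) resp. F(t e) -- the support conditions. *)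
Record sheaf (F : fieldType) (V E : finType) (t h : E -> V) := Sheaf {
  nV : nat;
  nE : nat;
  vtx : 'I_nV -> V;
  etx : 'I_nE -> E;
  resH : 'M[F]_(nE, nV);
  resT : 'M[F]_(nE, nV);
  resH_supp : forall i j, vtx j != h (etx i) -> resH i j = 0;
  resT_supp : forall i j, vtx j != t (etx i) -> resT i j = 0
}.
Arguments nV {F V E t h} s.
Arguments nE {F V E t h} s.
Arguments vtx {F V E t h} s _.
Arguments etx {F V E t h} s _.
Arguments resH {F V E t h} s.
Arguments resT {F V E t h} s.

Section SheafDefs.
Variables (F : fieldType) (V E : finType) (t h : E -> V) (S : sheaf F t h).

Definition stalk_dimE (e : E) : nat := #|[set i | etx S i == e]|.

Definition dmx : 'M[F]_(nE S, nV S) := resH S - resT S.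
Definition h1 : nat := \rank (kermx dmx).

Definition edge_space (e : E) : 'M[F]_(nE S) :=
  \matrix_(i, j) ((i == j) && (etx S i == e))%:R.

(* preimage {w | w *m D \in U} of U under D *)
Definition preim_mx (D : 'M[F]_(nE S, nV S)) (U : 'M[F]_(nV S)) : 'M[F]_(nE S) :=
  kermx (D *m cokermx U).

Definition Gamma_ht (U : 'M[F]_(nV S)) : 'M[F]_(nE S) :=
  (\sum_(e : E) (edge_space e :&: preim_mx (resH S) U :&: preim_mx (resT S) U))%MS.

Definition excess (U : 'M[F]_(nV S)) : int :=
  (\rank (Gamma_ht U))%:Z - (\rank U)%:Z.

End SheafDefs.
Arguments stalk_dimE {F V E t h} S e.
Arguments dmx {F V E t h} S.
Arguments h1 {F V E t h} S.
Arguments edge_space {F V E t h} S e.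
Arguments preim_mx {F V E t h} S D U.
Arguments Gamma_ht {F V E t h} S U.
Arguments excess {F V E t h} S U.

(* ---------- The field of rational functions F(psi) ----------
   Polynomials in k independent indeterminates, as iterated univariate
   polynomial rings, and their field of fractions. *)
Fixpoint mpoly_ring (R : idomainType) (k : nat) : idomainType :=
  match k with
  | 0 => R
  | k'.+1 => ({poly (mpoly_ring R k')} : idomainType)
  end.

Fixpoint mvar (R : idomainType) (k : nat) : 'I_k -> mpoly_ring R k :=
  match k return 'I_k -> mpoly_ring R k with
  | 0 => fun _ => 0
  | k'.+1 => fun i =>
      match unlift ord_max i with
      | Some j => (mvar R j)%:P
      | None => 'X
      end
  end.

Fixpoint mconst (R : idomainType) (k : nat) : R -> mpoly_ring R k :=
  match k return R -> mpoly_ring R k with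
  | 0 => fun a => a
  | k'.+1 => fun a => (@mconst R k' a)%:P
  end.

Definition ratfun_field (R : idomainType) (k : nat) : fieldType :=
  {fraction (mpoly_ring R k)}.

Section Twist.
Variables (F : fieldType) (V E : finType) (t h : E -> V) (S : sheaf F t h).

Definition Ftw : fieldType := ratfun_field F #|E|.

Definition to_tw (a : F) : Ftw := @FracField.tofrac (mpoly_ring F #|E|) (@mconst F #|E| a).

Definition psi (e : E) : Ftw := @FracField.tofrac (mpoly_ring F #|E|) (@mvar F #|E| (enum_rank e)).

(* twisted sheaf: head maps F(h,e), tail maps psi(e) F(t,e);
   its differential d^psi = d_h - d_t^psi over F(psi) *)
Definition dmx_twist : 'M[Ftw]_(nE S, nV S) :=
  map_mx to_tw (resH S) - diag_mx (\row_i psi (etx S i)) *m map_mx to_tw (resT S).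

Definition h1_twist : nat := \rank (kermx dmx_twist).

End Twist.
Arguments dmx_twist {F V E t h} S.
Arguments h1_twist {F V E t h} S.

(* Main.v *)
Require Import Defs.
From HB Require Import structures.
From mathcomp Require Import all_boot all_order all_algebra zify ring.
Set Implicit Arguments. Unset Strict Implicit. Unset Printing Implicit Defensive.
Import GRing.Theory.
Local Open Scope ring_scope.
Local Open Scope quotient_scope.

Section Psel.
Variable K : fieldType.
Definition Psel n (J : {set 'I_n}) : 'M[K]_n :=
  \matrix_(i, j) ((i == j) && (i \in J))%:R.

Lemma row_Psel n (J : {set 'I_n}) a :
  row a (Psel J) = if a \in J then delta_mx 0 a else 0.
Proof.
apply/rowP=> j; rewrite !mxE; case: (a \in J) => /=; rewrite ?mxE ?andbT ?andbF ?eqxx //.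
by rewrite eq_sym.
Qed.

Lemma row_PselM n m (J : {set 'I_n}) (A : 'M[K]_(n, m)) a :
  row a (Psel J *m A) = if a \in J then row a A else 0.
Proof.
rewrite row_mul row_Psel; case: (a \in J); last by rewrite mul0mx.
by rewrite -rowE.
Qed.

Lemma Psel_rank_le n (J : {set 'I_n}) : (\rank (Psel J) <= #|J|)%N.
Proof.
set X : 'M[K]_(#|J|, n) := \matrix_(k, j) (enum_val k == j)%:R.
apply: leq_trans (rank_leq_row X); apply: mxrankS; apply/row_subP=> a.
rewrite row_Psel; case: ifP=> aJ; last exact: sub0mx.
apply/submxP; exists (delta_mx 0 (enum_rank_in aJ a)); rewrite -rowE.
apply/rowP=> j; by rewrite !mxE enum_rankK_in // eq_sym (eqxx (0 : 'I_1)) /=.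
Qed.

Lemma PselC n (J : {set 'I_n}) : Psel J + Psel (~: J) = 1%:M.
Proof.
apply/matrixP=> i j; rewrite !mxE inE; case: (i \in J); case: (i == j); rewrite /= ?addr0 ?add0r //.

Qed.

Lemma Psel_rank n (J : {set 'I_n}) : \rank (Psel J) = #|J|.
Proof.
have h1 := Psel_rank_le J; have h2 := Psel_rank_le (~: J).
have h3 := mxrank_add (Psel J) (Psel (~: J)).
rewrite PselC mxrank1 in h3.
have := cardsC J; rewrite card_ord; lia.
Qed.

Lemma PselCM n (J : {set 'I_n}) : Psel (~: J) *m Psel J = 0.
Proof.
apply/row_matrixP=> a; rewrite row_PselM inE row0; case: ifP => // /negPf aJ.
by rewrite row_Psel aJ.
Qed.

Lemma mul_Psel_id m n (J : {set 'I_n}) (A : 'M[K]_(m, n)) :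
  (forall r c, c \notin J -> A r c = 0) -> A *m Psel J = A.
Proof.
move=> H; apply/matrixP=> r c; rewrite !mxE (bigD1 c) //= big1 => [|k kc].
  rewrite !mxE eqxx /= addr0; case cJ: (c \in J); first by rewrite mulr1.
  by rewrite mulr0 H ?cJ.
by rewrite mxE (negPf kc) mulr0.
Qed.
End Psel.
Lemma mconst_morph (R : idomainType) k :
  exists g : {rmorphism R -> mpoly_ring R k}, g =1 @mconst R k.
Proof.
elim: k => [|k [g Hg]]; first by exists idfun.
exists (polyC \o g : {rmorphism R -> {poly mpoly_ring R k}}) => a /=.
by rewrite Hg.
Qed.

Lemma shift_ex (R : idomainType) k (i : 'I_k) :
  exists f g : {rmorphism mpoly_ring R k -> mpoly_ring R k},
    [/\ cancel f g, (forall a, f (mconst k a) = mconst k a),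
        (forall j, j != i -> f (mvar R j) = mvar R j)
      & f (mvar R i) = mvar R i + 1].
Proof.
elim: k i => [[]//|k IH i].
have cX : forall (h : {rmorphism mpoly_ring R k -> mpoly_ring R k}) (u : {poly mpoly_ring R k}),
   commr_rmorph (polyC \o h : {rmorphism _ -> {poly mpoly_ring R k}}) u.
  by move=> h u x; exact: mulrC.
case: (unliftP ord_max i) => [j ->|->].
- have [f [g [fK fc fo fi]]] := IH j.
  exists (horner_morph (cX f 'X) : {rmorphism {poly mpoly_ring R k} -> {poly mpoly_ring R k}}).
  exists (horner_morph (cX g 'X) : {rmorphism {poly mpoly_ring R k} -> {poly mpoly_ring R k}}).
  have fC a : horner_morph (cX f 'X) a%:P = (f a)%:P by rewrite horner_morphC.
  have fX : horner_morph (cX f 'X) 'X = 'X by rewrite horner_morphX.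
  have gC a : horner_morph (cX g 'X) a%:P = (g a)%:P by rewrite horner_morphC.
  have gX : horner_morph (cX g 'X) 'X = 'X by rewrite horner_morphX.
  split.
  + move=> p; elim/poly_ind: p => [|p c IHp]; first by rewrite !rmorph0.
    by rewrite !rmorphD !rmorphM /= IHp fX gX fC gC fK.
  + by move=> a /=; rewrite fC fc.
  + move=> j0; case: (unliftP ord_max j0) => [j1 ->|->] /=; rewrite ?liftK ?unlift_none.
      by move=> ne; rewrite fC fo // ; apply: contraNneq ne => ->.
    by rewrite fX.
  + by rewrite /= liftK fC fi rmorphD.
- pose f := (horner_morph (cX idfun ('X + 1)) : {rmorphism {poly mpoly_ring R k} -> {poly mpoly_ring R k}}).
  pose g := (horner_morph (cX idfun ('X - 1)) : {rmorphism {poly mpoly_ring R k} -> {poly mpoly_ring R k}}).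
  exists f, g.
  have fC a : f a%:P = a%:P by rewrite /f /= horner_morphC.
  have fX : f 'X = 'X + 1 by rewrite /f /= horner_morphX.
  have gC a : g a%:P = a%:P by rewrite /g /= horner_morphC.
  have gX : g 'X = 'X - 1 by rewrite /g /= horner_morphX.
  split.
  + move=> p; elim/poly_ind: p => [|p c IHp]; first by rewrite !rmorph0.
    by rewrite !rmorphD !rmorphM /= IHp fX fC rmorphD rmorph1 gX gC subrK.
  + by move=> a /=; rewrite fC.
  + move=> j0; case: (unliftP ord_max j0) => [j1 ->|->] /=; rewrite ?liftK ?unlift_none.
      by rewrite fC.
    by rewrite eqxx.
  + by rewrite /= unlift_none fX.
Qed.
Lemma frac_clear (R : idomainType) (x : {fraction R}) :
  exists n d : R, d != 0 /\ x * FracField.tofrac d = FracField.tofrac n.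
Proof.
elim/quotW: x => r; exists (\n_r), (\d_r); split; first exact: denom_ratioP.
unlock FracField.tofrac.
rewrite -[_ * _]/(FracField.mul _ _) -FracField.pi_mul.
apply/eqmodP; rewrite /= FracField.equivfE /FracField.mulf.
have d0 := denom_ratioP r.
rewrite !numden_Ratio ?oner_neq0 ?mulf_neq0 //.
  by rewrite mulr1 mulr1 mulrC.
all: exact: oner_neq0.
Qed.


Lemma rv_clear (R : idomainType) n (v : 'rV[{fraction R}]_n) :
  exists (c : R) (w : 'rV[R]_n),
    c != 0 /\ map_mx (@FracField.tofrac R) w = FracField.tofrac c *: v.
Proof.
have: forall j : 'I_n, exists p : R * R, p.2 != 0 /\ v 0 j * FracField.tofrac p.2 = FracField.tofrac p.1.
  by move=> j; have [a [b [b0 e]]] := frac_clear (v 0 j); exists (a, b).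
case/fin_all_exists=> p Hp.
exists (\prod_j (p j).2), (\row_j ((p j).1 * \prod_(k | k != j) (p k).2)); split.
  by apply/prodf_neq0 => j _; case: (Hp j).
apply/rowP=> j; rewrite !mxE [in RHS](bigD1 j) //= !rmorphM.
rewrite [X in X * _ = _](_ : _ = v 0 j * FracField.tofrac (p j).2); last by case: (Hp j).
ring.
Qed.

Section Main.
Variables (F : fieldType) (V E : finType) (t h : E -> V) (S : sheaf F t h).
Hypothesis dimE_le1 : forall e : E, (stalk_dimE S e <= 1)%N.

Local Notation nE := (nE S).
Local Notation nV := (nV S).
Local Notation H := (resH S).
Local Notation T := (resT S).

Lemma etx_inj : injective (etx S).
Proof.
move=> i j eij; apply/eqP; apply/negPn/negP => nij.
have := dimE_le1 (etx S i); rewrite /stalk_dimE.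
have sub : [set i; j] \subset [set k | etx S k == etx S i].
  by apply/subsetP=> k; rewrite !inE => /orP[]/eqP->; rewrite ?eij eqxx.
have := subset_leq_card sub; rewrite cards2 nij; lia.
Qed.

Lemma mulPsel_entry m n (J : {set 'I_n}) (A : 'M[F]_(m, n)) r c :
  (A *m Psel _ J) r c = if c \in J then A r c else 0.
Proof.
rewrite !mxE (bigD1 c) //= big1 => [|k kc].
  by rewrite !mxE eqxx /= addr0; case: (c \in J); rewrite ?mulr1 ?mulr0.
by rewrite mxE (negPf kc) mulr0.
Qed.

Definition good (U : 'M[F]_nV) : {set 'I_nE} :=
  [set i | (row i H <= U)%MS && (row i T <= U)%MS].

Lemma edge_spaceE e : edge_space S e = Psel F [set k | etx S k == e].
Proof. by apply/matrixP=> i j; rewrite !mxE inE. Qed.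

Lemma preimP (D : 'M[F]_(nE, nV)) U (z : 'rV[F]_nE) :
  (z <= preim_mx S D U)%MS = (z *m D <= U)%MS.
Proof. by rewrite /preim_mx sub_kermx mulmxA submxE. Qed.

Lemma Gamma_eq U : (Gamma_ht S U == Psel F (good U))%MS.
Proof.
apply/andP; split.
  apply/sumsmx_subP=> e _; apply/row_subP=> r.
  set z := row r _.
  have zM : (z <= edge_space S e :&: preim_mx S H U :&: preim_mx S T U)%MS by exact: row_sub.
  have ze : (z <= edge_space S e)%MS.
    exact: submx_trans zM (submx_trans (capmxSl _ _) (capmxSl _ _)).
  have zH : (z *m H <= U)%MS.
    by rewrite -preimP; exact: submx_trans zM (submx_trans (capmxSl _ _) (capmxSr _ _)).
  have zT : (z *m T <= U)%MS by rewrite -preimP; exact: submx_trans zM (capmxSr _ _).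
  clearbody z.
  have z0 k : etx S k != e -> z 0 k = 0.
    move=> ne; move: ze; rewrite edge_spaceE => /submxP[y ->].
    by rewrite mulPsel_entry inE (negPf ne).
  have [->|/eqP nz] := eqVneq z 0; first exact: sub0mx.
  have [k zk] : exists k, z 0 k != 0.
    case: (boolP [exists k, z 0 k != 0]) => [/existsP//|/existsPn zz].
    exfalso; apply: nz; apply/rowP=> k.
    by move: (zz k); rewrite negbK mxE => /eqP ->.
  have ek : etx S k = e by apply/eqP; apply: contraR zk => ne; rewrite z0.
  have zE : z = z 0 k *: delta_mx 0 k.
    apply/rowP=> l; rewrite !mxE /=.
    have [->|lk] := eqVneq l k; first by rewrite ?eqxx ?mulr1.
    rewrite mulr0 z0 //; apply: contra_neq lk => el.
    by apply: etx_inj; rewrite el ek.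
  have kg : k \in good U.
    rewrite inE; rewrite zE -scalemxAl -rowE in zH; rewrite zE -scalemxAl -rowE in zT.
    by rewrite -(eqmx_scale _ zk) zH -(eqmx_scale _ zk) zT.
  rewrite zE; apply: scalemx_sub.
  have <- : row k (Psel F (good U)) = delta_mx 0 k by rewrite row_Psel kg.
  exact: row_sub.
apply/row_subP=> a; rewrite row_Psel; case: ifP => ag; last exact: sub0mx.
apply: (sumsmx_sup (etx S a)) => //.
move: ag; rewrite inE => /andP[aH aT].
rewrite !sub_capmx !preimP -!rowE aH aT !andbT edge_spaceE.
have <- : row a (Psel F [set k | etx S k == etx S a]) = delta_mx 0 a.
  by rewrite row_Psel inE eqxx.
exact: row_sub.
Qed.

Lemma rank_Gamma U : \rank (Gamma_ht S U) = #|good U|.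
Proof. by rewrite (eqmxP (Gamma_eq U)) Psel_rank. Qed.


Local Notation Rk := (mpoly_ring F #|E|).
Local Notation tf := (@FracField.tofrac Rk).
Local Notation D := (dmx_twist S).
Local Notation K := (Ftw F E).

Variable phi : {rmorphism F -> Rk}.
Hypothesis phiE : phi =1 @mconst F #|E|.

Definition tau : {rmorphism F -> K} := (tf \o phi : {rmorphism F -> {fraction Rk}}).

Lemma D_entry a b : D a b = tau (H a b) - psi F (etx S a) * tau (T a b).
Proof.
by rewrite /dmx_twist mul_diag_mx !mxE /tau /= /to_tw !phiE.
Qed.

Lemma row_D a : row a D = row a (map_mx tau H) + (- psi F (etx S a)) *: row a (map_mx tau T).
Proof. by apply/rowP=> b; rewrite [LHS]mxE D_entry !mxE mulNr. Qed.

Lemma partA U : (#|good U| <= \rank U + (nE - \rank D))%N.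
Proof.
set G := good U.
have h1 : (\rank D <= \rank (Psel K G *m D) + \rank (Psel K (~: G) *m D))%N.
  by rewrite -[X in (\rank X <= _)%N]mul1mx -(PselC K G) mulmxDl mxrank_add.
have h2 : (\rank (Psel K (~: G) *m D) <= nE - #|G|)%N.
  apply: leq_trans (mxrankM_maxl _ _) _; rewrite Psel_rank.
  by have := cardsC G; rewrite card_ord; lia.
have h3 : (\rank (Psel K G *m D) <= \rank U)%N.
  rewrite -(mxrank_map tau U); apply: mxrankS; apply/row_subP=> a.
  rewrite row_PselM; case: ifP => aG; last exact: sub0mx.
  move: aG; rewrite inE => /andP[aH aT].
  rewrite row_D; apply: addmx_sub; last apply: scalemx_sub.
    by rewrite -map_row map_submx.
  by rewrite -map_row map_submx.
have h4 := rank_leq_row D.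
have h5 : (#|G| <= nE)%N by have := max_card G; rewrite card_ord.
lia.
Qed.


Definition Kr := kermx D.
Definition Jset : {set 'I_nE} := [set i | [exists r, Kr r i != 0]].

Lemma Kr_out r c : c \notin Jset -> Kr r c = 0.
Proof.
rewrite inE => /existsPn /(_ r); by rewrite negbK => /eqP.
Qed.

Lemma Kr_Psel : Kr *m Psel K Jset = Kr.
Proof. by apply: mul_Psel_id => r c; apply: Kr_out. Qed.

Definition DR : 'M[Rk]_(nE, nV) :=
  \matrix_(i, j) (phi (H i j) - mvar F (enum_rank (etx S i)) * phi (T i j)).

Lemma DR_map : map_mx tf DR = D.
Proof.
apply/matrixP=> i j; rewrite D_entry !mxE rmorphB rmorphM /=.
by [].
Qed.

Lemma key a : a \in Jset -> (row a (map_mx tau T) <= Psel K Jset *m D)%MS.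
Proof.
rewrite inE => /existsP [r Kra].
set v := row r Kr.
have vD : v *m D = 0 by rewrite /v -row_mul mulmx_ker row0.
have [c [w [c0 wv]]] := rv_clear v.
have wDR : w *m DR = 0.
  have e : map_mx tf (w *m DR) = 0.
    by rewrite map_mxM wv DR_map -scalemxAl vD scaler0.
  apply/matrixP=> i j; move/matrixP: e => /(_ i j); rewrite !mxE.
  by move/eqP; rewrite tofrac_eq0 => /eqP.
have wE i : tf (w 0 i) = tf c * v 0 i.
  by move/matrixP: wv => /(_ 0 i); rewrite !mxE.
have [f [g [fK fc fo fi]]] := shift_ex F (enum_rank (etx S a)).
have fphi x : f (phi x) = phi x by rewrite phiE fc.
set u := map_mx tf (map_mx f w).
set Z : 'M[Rk]_(nE, nV) := \matrix_(i, j) (if i == a then phi (T i j) else 0).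
have DRZ : DR = map_mx f DR + Z.
  apply/matrixP=> i j; rewrite !mxE rmorphB rmorphM !fphi.
  have [->|ia] := eqVneq i a; first by rewrite fi; ring.
  rewrite fo ?addr0 //; apply: contra_neq ia => /enum_rank_inj.
  exact: etx_inj.
have uD : u *m D = u 0 a *: row a (map_mx tau T).
  rewrite -DR_map DRZ map_mxD mulmxDr.
  have -> : u *m map_mx tf (map_mx f DR) = 0.
    by rewrite /u -!map_mxM wDR !map_mx0.
  rewrite add0r; apply/rowP=> j; rewrite !mxE (bigD1 a) //= big1 => [|i ia].
    by rewrite !mxE eqxx addr0.
  by rewrite !mxE (negPf ia) rmorph0 mulr0.
have ua : u 0 a != 0.
  rewrite /u !mxE tofrac_eq0; apply/negP => /eqP fw.
  have w0 : w 0 a = 0 by rewrite -[w 0 a]fK fw rmorph0.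
  have := wE a; rewrite w0 rmorph0 => /esym/eqP; rewrite mulf_eq0 tofrac_eq0 (negPf c0) /=.
  by rewrite /v mxE (negPf Kra).
have uJ : u *m Psel K Jset = u.
  apply: mul_Psel_id => r' i iJ; rewrite ord1 /u !mxE.
  have := wE i; rewrite /v mxE Kr_out // mulr0 => /eqP; rewrite tofrac_eq0 => /eqP ->.
  by rewrite !rmorph0.
have -> : row a (map_mx tau T) = (u 0 a)^-1 *: (u *m (Psel K Jset *m D)).
  by rewrite mulmxA uJ uD scalerA mulVf // scale1r.
by rewrite scalemx_sub // submxMl.
Qed.


Definition U0 : 'M[F]_nV := <<col_mx (Psel F Jset *m H) (Psel F Jset *m T)>>%MS.

Lemma J_good : Jset \subset good U0.
Proof.
have := submx_refl (col_mx (Psel F Jset *m H) (Psel F Jset *m T)).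
rewrite col_mx_sub => /andP[sH sT].
apply/subsetP=> i iJ; rewrite inE; apply/andP; split.
  have := row_sub i (Psel F Jset *m H); rewrite row_PselM iJ => /submx_trans; apply.
  by rewrite /U0 genmxE.
have := row_sub i (Psel F Jset *m T); rewrite row_PselM iJ => /submx_trans; apply.
by rewrite /U0 genmxE.
Qed.

Lemma map_Psel n (J : {set 'I_n}) : map_mx tau (Psel F J) = Psel K J.
Proof. by apply/matrixP=> i j; rewrite !mxE rmorph_nat. Qed.

Lemma U0_sub : (map_mx tau U0 <= Psel K Jset *m D)%MS.
Proof.
rewrite (map_genmx tau) genmxE map_col_mx col_mx_sub !map_mxM !map_Psel.
apply/andP; split; apply/row_subP=> a; rewrite row_PselM; case: ifP => aJ;
  try exact: sub0mx.
  have -> : row a (map_mx tau H) = row a D + psi F (etx S a) *: row a (map_mx tau T).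
    by rewrite row_D scaleNr subrK.
  apply: addmx_sub; last by apply: scalemx_sub; apply: key.
  by have := row_sub a (Psel K Jset *m D); rewrite row_PselM aJ.
exact: key.
Qed.

Lemma arith_rb (x k s p kr j jc n : nat) : (x <= n)%N -> kr = (n - x)%N -> (s <= kr)%N ->
  (s + 0)%N = (k + p)%N -> p = jc -> (j + jc)%N = n -> (x + k <= j)%N.
Proof. lia. Qed.

Lemma rank_bound : (\rank (Psel K Jset *m D) + \rank Kr <= #|Jset|)%N.
Proof.
set P := Psel K (~: Jset).
have M0 : \rank (Kr :&: P)%MS = 0%N.
  move: (capmxSl Kr P) (capmxSr Kr P) => /submxP[Y1 e1] /submxP[Y2 e2].
  have e3 : (Kr :&: P)%MS *m Psel K Jset = (Kr :&: P)%MS.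
    by rewrite {1}e1 -mulmxA Kr_Psel -e1.
  have e4 : (Kr :&: P)%MS *m Psel K Jset = 0.
    by rewrite e2 -mulmxA PselCM mulmx0.
  by rewrite -e3 e4 mxrank0.
have sum := mxrank_sum_cap Kr P.
have sub : ((Kr + P)%MS <= kermx (Psel K Jset *m D))%MS.
  rewrite addsmx_sub !sub_kermx mulmxA Kr_Psel mulmx_ker eqxx /=.
  by rewrite mulmxA PselCM mul0mx.
have := mxrankS sub. have := mxrank_ker (Psel K Jset *m D).
have rP : \rank P = #|~: Jset| by rewrite /P Psel_rank.
have := cardsC Jset; rewrite card_ord => cJ.
have := rank_leq_row (Psel K Jset *m D).
move=> h1 h2 h3; rewrite M0 in sum.
exact: (arith_rb h1 h2 h3 sum rP cJ).
Qed.

End Main.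

Lemma arith_A (g r m : nat) : (g <= r + m)%N -> (g%:Z - r%:Z <= m%:Z :> int).
Proof. move=> hh; lia. Qed.

Lemma arith_B (j g x k u m : nat) : (j <= g)%N -> (x + k <= j)%N -> (u <= x)%N ->
  k = m -> (m%:Z <= g%:Z - u%:Z :> int).
Proof. move=> h1 h2 h3 h4; lia. Qed.

Theorem theorem1 (F : fieldType)
  (F_infinite : forall s : seq F, exists x : F, x \notin s)
  (V E : finType) (t h : E -> V) (S : sheaf F t h)
  (dimE_le1 : forall e : E, (stalk_dimE S e <= 1)%N) :
  (exists U : 'M[F]_(nV S), excess S U = (h1_twist S)%:Z) /\
  (forall U : 'M[F]_(nV S), excess S U <= (h1_twist S)%:Z).
Proof.
have [phi phiE] := mconst_morph F #|E|.
have hA U : excess S U <= (h1_twist S)%:Z.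
  rewrite /excess (rank_Gamma dimE_le1) /h1_twist (mxrank_ker (dmx_twist S)).
  exact: arith_A (partA phiE U).
split => //.
exists (U0 S); apply/eqP; rewrite Order.POrderTheory.eq_le hA /=.
rewrite /excess (rank_Gamma dimE_le1) /h1_twist.
have h3 := mxrankS (U0_sub dimE_le1 phiE); rewrite mxrank_map in h3.
have h1 := subset_leq_card (J_good S). have h2 := rank_bound S.
exact: (arith_B h1 h2 h3 (erefl _)).
Qed.
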